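(* Let $n\ge1$ and $1\le r\le n$ be integers, let $f:\mathbb{I}_n^r\to\mathbb{R}^+$ be an arbitrary function, and let $X$ be a real number with $X>\max_{J,J'\in\mathbb{I}_n^r}|f(J)-f(J')|$. Then the function $\tilde f:\mathbb{I}_n^r\to\mathbb{R}^+$ defined by $\tilde f(J)=|J|(n-|J|)X+|J|f(J)$ is graded.
   Context: $\mathbb{R}^+$ denotes the positive reals. For integers $i\le j$, $[i:j]=\{i,\dots,j\}$. For integers $r\le n$, $\mathbb{I}_n^r=\{[i:j]:1\le i\le j\le n,\ j<i+r\}$. A function $f:\mathbb{I}_n^r\to\mathbb{R}^+$ is graded if for all $J,J'\in\mathbb{I}_n^r$ with $|J|<|J'|$ one has $f(J)/|J|>f(J')/|J'|$. *)

(* Defs.v *)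
From Stdlib Require Import Reals Lra Lia.
Open Scope R_scope.

(* An interval [i:j] = {i,...,j} is represented by the pair of its endpoints
   (i, j).  [inI n r i j] says [i:j] belongs to I_n^r:
   1 <= i <= j <= n and j < i + r. *)
Definition inI (n r i j : nat) : Prop :=
  (1 <= i)%nat /\ (i <= j)%nat /\ (j <= n)%nat /\ (j < i + r)%nat.

Definition icard (i j : nat) : nat := (j - i + 1)%nat.

Definition graded (n r : nat) (g : nat -> nat -> R) : Prop :=
  forall i j i' j' : nat,
    inI n r i j -> inI n r i' j' ->
    (icard i j < icard i' j')%nat ->
    g i j / INR (icard i j) > g i' j' / INR (icard i' j').

Definition ftilde (n : nat) (X : R) (f : nat -> nat -> R) : nat -> nat -> R :=
  fun i j => INR (icard i j) * (INR n - INR (icard i j)) * X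
             + INR (icard i j) * f i j.

(* Main.v *)
Require Import Defs.
From Stdlib Require Import Reals Lra Lia.
Open Scope R_scope.

Lemma div_ft (n : nat) (X : R) (f : nat -> nat -> R) i j :
  (1 <= icard i j)%nat ->
  ftilde n X f i j / INR (icard i j) = (INR n - INR (icard i j)) * X + f i j.
Proof.
  intros H. unfold ftilde. assert (INR (icard i j) > 0).
  { apply lt_0_INR; lia. }
  field. lra.
Qed.

Theorem lemma6p4 (n r : nat) (f : nat -> nat -> R) (X : R) :
  (1 <= n)%nat -> (1 <= r)%nat -> (r <= n)%nat ->
  (forall i j, inI n r i j -> 0 < f i j) ->
  (forall i j i' j', inI n r i j -> inI n r i' j' ->
     Rabs (f i j - f i' j') < X) ->
  (forall i j, inI n r i j -> 0 < ftilde n X f i j) /\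
  graded n r (ftilde n X f).
Proof.
  intros Hn Hr Hrn Hpos Hx. split.
  - intros i j Hij.
    assert (HX : 0 < X).
    { specialize (Hx i j i j Hij Hij). rewrite Rminus_diag, Rabs_R0 in Hx. lra. }
    destruct Hij as (H1 & H2 & H3 & H4).
    assert (Hk1 : 1 <= INR (icard i j)).
    { replace 1 with (INR 1) by reflexivity. apply le_INR. unfold icard; lia. }
    assert (Hk2 : INR (icard i j) <= INR n). { apply le_INR. unfold icard; lia. }
    assert (Hf := Hpos i j (conj H1 (conj H2 (conj H3 H4)))).
    unfold ftilde.
    assert (0 <= INR (icard i j) * (INR n - INR (icard i j)) * X).
    { apply Rmult_le_pos; [apply Rmult_le_pos|]; lra. }
    assert (0 < INR (icard i j) * f i j) by (apply Rmult_lt_0_compat; lra).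
    lra.
  - intros i j i' j' Hij Hij' Hlt.
    assert (HX : 0 < X).
    { specialize (Hx i j i j Hij Hij). rewrite Rminus_diag, Rabs_R0 in Hx. lra. }
    assert (Hd := Hx i' j' i j Hij' Hij).
    apply Rabs_def2 in Hd.
    destruct Hij as (H1 & H2 & H3 & H4).
    destruct Hij' as (H1' & H2' & H3' & H4').
    rewrite !div_ft by (unfold icard; lia).
    assert (INR (icard i j) + 1 <= INR (icard i' j')).
    { rewrite <- S_INR. apply le_INR. lia. }
    unfold Rgt. nra.
Qed.
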